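(* Let $\mathbb{F}_q$ be a finite field and $n\ge3$. For $n$ odd and $\alpha\in\mathbb{F}_q^*$ let $N_{\mathbb{D}_n}(\alpha)$ be the number of $\mathbb{F}_q$-points of $X_{\mathbb{D}_n}(\alpha,1,\dots,1)$; for $n$ even and $\alpha,\beta\in\mathbb{F}_q^*$ let $N_{\mathbb{D}_n}(\alpha,\beta)$ be the number of $\mathbb{F}_q$-points of $X_{\mathbb{D}_n}(\alpha,\beta,1,\dots,1)$. Then: (1) if $n$ is odd and $\alpha\neq1$, $N_{\mathbb{D}_n}(\alpha)=q^n-1$; (2) if $n$ is odd, $N_{\mathbb{D}_n}(1)=q^n-1+q^2\frac{q^{n-1}-1}{q^2-1}$; (3) if $n$ is even, $\alpha\neq\beta$, $\alpha\neq(-1)^{n/2}$ and $\beta\neq(-1)^{n/2}$, then $N_{\mathbb{D}_n}(\alpha,\beta)=(q^{n/2}-1)^2$; (4) if $n$ is even and $\alpha=\beta\neq(-1)^{n/2}$, then $N_{\mathbb{D}_n}(\alpha,\alpha)=(q^{n/2}-1)^2+q^2\frac{(q^{(n-2)/2}-1)(q^{n/2}-1)}{q^2-1}$; (5) if $n$ is even, $\alpha\neq\beta$ and $\alpha=(-1)^{n/2}$, then $N_{\mathbb{D}_n}((-1)^{n/2},\beta)=(q^{n/2}-1)^2+(q-1)q^{n/2}$; (6) if $n$ is even, $N_{\mathbb{D}_n}((-1)^{n/2},(-1)^{n/2})=(q^{n/2}-1)^2+2(q-1)q^{n/2}+q^2\frac{(q^{(n-2)/2}-1)(q^{n/2}-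1)}{q^2-1}+q^{(n+2)/2}$.
   Context: $X_{\mathbb{D}_n}(\alpha_1,\dots,\alpha_n)$ is the affine variety over $\mathbb{F}_q$ in variables $x_1,\dots,x_n,x'_1,\dots,x'_n$ defined by $x_1x'_1=1+\alpha_1x_3$, $x_2x'_2=1+\alpha_2x_3$, $x_3x'_3=1+\alpha_3x_1x_2x_4$, $x_ix'_i=1+\alpha_ix_{i-1}x_{i+1}$ for $4\le i\le n-1$, $x_nx'_n=1+\alpha_nx_{n-1}$ (for $n=3$: $x_3x'_3=1+\alpha_3x_1x_2$). Thus in $X_{\mathbb{D}_n}(\alpha,\beta,1,\dots,1)$ the parameters $\alpha,\beta$ sit on the two short leaves $1,2$ attached to vertex $3$. *)

(* Defs.v *)
From HB Require Import structures.
From mathcomp Require Import all_boot all_order all_algebra all_field.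
Set Implicit Arguments. Unset Strict Implicit. Unset Printing Implicit Defensive.
Import Order.TTheory GRing.Theory Num.Theory.
Local Open Scope ring_scope.

(* Coordinates are stored in a finite function on 'I_n (0-based); the paper's
   1-based coordinate x_k (1 <= k <= n) is [coord f k]; out-of-range is 0
   (never used by the equations). *)
Definition coord (F : finFieldType) (n : nat) (f : {ffun 'I_n -> F}) (k : nat) : F :=
  if k is k'.+1 then oapp f 0 (insub k' : option 'I_n) else 0.

Definition rhsD (F : finFieldType) (n : nat) (a : nat -> F)
    (x : nat -> F) (k : nat) : F :=
  if k == 1%N then 1 + a 1%N * x 3%N
  else if k == 2%N then 1 + a 2%N * x 3%N
  else if k == 3%N then
    (if n == 3%N then 1 + a 3%N * x 1%N * x 2%N
     else 1 + a 3%N * x 1%N * x 2%N * x 4%N)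
  else if k == n then 1 + a n * x n.-1
  else 1 + a k * x k.-1 * x k.+1.

Definition NX (F : finFieldType) (n : nat) (a : nat -> F) : nat :=
  #|[set p : {ffun 'I_n -> F} * {ffun 'I_n -> F} |
     [forall i : 'I_n,
        coord p.1 i.+1 * coord p.2 i.+1 == rhsD n a (coord p.1) i.+1]]|.

Definition params2 (F : finFieldType) (al be : F) (k : nat) : F :=
  if k == 1%N then al else if k == 2%N then be else 1.

Definition NDodd (F : finFieldType) (n : nat) (al : F) : nat := NX n (params2 al 1).
Definition NDeven (F : finFieldType) (n : nat) (al be : F) : nat := NX n (params2 al be).

(* Main.v *)
Require Import Defs.
From HB Require Import structures.
From mathcomp Require Import all_boot all_order all_algebra all_field.
From mathcomp Require Import zify ring.
Import Order.TTheory GRing.Theory Num.Theory.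
Local Open Scope ring_scope.
Set Implicit Arguments. Unset Strict Implicit. Unset Printing Implicit Defensive.

Section S.
Variable F : finFieldType.
Variables al be : F.
Local Notation q := (#|F|%:R : rat).

Definition wt (x r : F) : rat := if x != 0 then 1 else if r == 0 then q else 0.

Lemma sum_wt_y (x r : F) : \sum_(y : F) ((x * y == r)%:R : rat) = wt x r.
Proof.
rewrite /wt; case: eqP => [->|/eqP x0] /=.
  under eq_bigr do rewrite mul0r.

  rewrite sumr_const; case: (r =P 0) => [->|/eqP rn].
    by rewrite eqxx -mulr_natr mul1r.
  by rewrite eq_sym (negbTE rn) mul0rn.
rewrite (bigD1 (r / x)) //= mulrCA divff // mulr1 eqxx big1 ?addr0 //.
move=> y yn; case: eqP => // xy; case/eqP: yn.
by rewrite -xy mulrC mulKf.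
Qed.

Definition rG (m : nat) (c : F) (X : nat -> F) (k : nat) : F :=
  if k == 1%N then 1 + al * (if m == 2%N then c else X 3%N)
  else if k == 2%N then 1 + be * (if m == 2%N then c else X 3%N)
  else if k == 3%N then
    (if m == 3%N then 1 + c * X 1%N * X 2%N else 1 + X 1%N * X 2%N * X 4%N)
  else if k == m then 1 + c * X m.-1
  else 1 + X k.-1 * X k.+1.

Definition Pw m c (X : nat -> F) : rat := \prod_(i < m) wt (X i.+1) (rG m c X i.+1).
Definition fD m c : rat := \sum_(g : {ffun 'I_m -> F}) Pw m c (Defs.coord g).

Arguments Defs.coord : simpl never.

Lemma coord_ord n (f : {ffun 'I_n -> F}) (i : 'I_n) : Defs.coord f i.+1 = f i.
Proof. by rewrite /Defs.coord valK. Qed.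

Lemma prod_bool (I : finType) (P : pred I) :
  \prod_i ((P i)%:R : rat) = ([forall i, P i])%:R.
Proof.
case: (boolP [forall i, P i]) => [/forallP H | /forallPn [i Hi]].
  by rewrite big1 // => i _; rewrite H.
by rewrite (bigD1 i) //= (negbTE Hi) mul0r.
Qed.

Lemma card_sum (T : finType) (P : pred T) :
  (#|[set p | P p]|%:R : rat) = \sum_p (P p)%:R.
Proof.
rewrite -sum1_card natr_sum big_mkcond /=; apply: eq_bigr => p _.
by rewrite inE; case: (P p).
Qed.

Lemma rhsD_rG n X k : (3 <= n)%N -> (1 <= k <= n)%N ->
  rhsD n (params2 al be) X k = rG n 1 X k.
Proof.
move=> n3 /andP [k1 kn]; rewrite /rhsD /rG /params2.
have n2 : (n == 2%N) = false by apply/eqP; lia.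
rewrite n2 /=.
have [//|k1'] := eqVneq k 1%N.
have [//|k2'] := eqVneq k 2%N.
have [_|k3'] := eqVneq k 3%N.
  by case: (n == 3%N); rewrite mul1r.
have n1 : (n == 1%N) = false by apply/eqP; lia.
rewrite n1.
have [_|kn'] := eqVneq k n; first by rewrite mul1r.
by rewrite mul1r.
Qed.

Lemma sum_pair (T1 T2 : finType) (H : T1 * T2 -> rat) :
  \sum_p H p = \sum_a \sum_b H (a, b).
Proof. by rewrite pair_bigA; apply: eq_bigr; case. Qed.

Lemma NX_fD n : (3 <= n)%N -> (NX n (params2 al be))%:R = fD n 1.
Proof.
move=> n3; rewrite /NX card_sum sum_pair /fD /=; apply: eq_bigr => p1 _.
under eq_bigr do rewrite -prod_bool.
under eq_bigr => p2 _ do under eq_bigr => i _ do rewrite !coord_ord.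
rewrite /fD /Pw -(bigA_distr_bigA (fun (i : 'I_n) (y : F) =>
   ((p1 i * y == rhsD n (params2 al be) (Defs.coord p1) i.+1))%:R : rat)) /=.
apply: eq_bigr => i _.
rewrite sum_wt_y. rewrite coord_ord rhsD_rG //; apply/andP; split=> //; exact: ltn_ord.
Qed.


Definition ext1 m (g : {ffun 'I_m -> F}) (u : F) : {ffun 'I_m.+1 -> F} :=
  [ffun i : 'I_m.+1 => oapp g u (insub (val i) : option 'I_m)].

Lemma coord_ext1 m (g : {ffun 'I_m -> F}) u k :
  Defs.coord (ext1 g u) k =
  if (k <= m)%N then Defs.coord g k else if k == m.+1 then u else 0.
Proof.
rewrite /Defs.coord; case: k => [|k] //=.
case: insubP => [i Hi Ei|Hi].
  rewrite /= /ext1 ffunE Ei; case: insubP => [j Hj Ej|Hj].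
    by rewrite ifT.
  have -> : (k < m)%N = false by apply/negbTE.
  by have -> : (k.+1 == m.+1) by rewrite eqSS; apply/eqP; move: Hi Hj; lia.
have -> : (k < m)%N = false by apply/negbTE; move: Hi; lia.
by have -> : (k.+1 == m.+1) = false by apply/negbTE; move: Hi; lia.
Qed.

Lemma sum_ext1 m (G : {ffun 'I_m.+1 -> F} -> rat) :
  \sum_f G f = \sum_(g : {ffun 'I_m -> F}) \sum_u G (ext1 g u).
Proof.
rewrite pair_bigA /= (reindex (fun p : {ffun 'I_m -> F} * F => ext1 p.1 p.2)) //.
exists (fun f : {ffun 'I_m.+1 -> F} =>
          ([ffun j : 'I_m => f (widen_ord (leqnSn m) j)], f ord_max)).
  case=> g u _ /=; congr (_, _).
    apply/ffunP => j; rewrite !ffunE /= valK //.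
  rewrite ffunE insubN //= ltnn //.
move=> f _; apply/ffunP => i; rewrite ffunE /=.
case: insubP => [j Hj Ej|Hj] /=.
  by rewrite ffunE; congr (f _); apply: val_inj.
congr (f _); apply: val_inj => /=; move: (ltn_ord i) Hj; lia.
Qed.


Lemma rG_congr m c X Y k : (2 <= m)%N -> (1 <= k <= m)%N ->
  (forall i, (1 <= i <= m)%N -> X i = Y i) -> rG m c X k = rG m c Y k.
Proof.
move=> m2 /andP [k1 km] E; rewrite /rG.
case: ifP => [/eqP Hk|Hk]; first by case: ifP => [//|/eqP Hm]; rewrite E //; lia.
case: ifP => [/eqP Hk2|Hk2]; first by case: ifP => [//|/eqP Hm]; rewrite E //; lia.
case: ifP => [/eqP Hk3|Hk3].
  by case: ifP => [/eqP Hm|/eqP Hm]; rewrite !E //; lia.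
case: ifP => [/eqP Hkm|Hkm]; first by rewrite !E //; lia.
by rewrite !E //; lia.
Qed.


Lemma Pw_congr m c X Y : (2 <= m)%N ->
  (forall i, (1 <= i <= m)%N -> X i = Y i) -> Pw m c X = Pw m c Y.
Proof.
move=> m2 E; rewrite /Pw; apply: eq_bigr => i _.
have Hi : (1 <= i.+1 <= m)%N by rewrite /= ltn_ord.
by rewrite (E _ Hi) (rG_congr c m2 Hi E).
Qed.

Lemma rG_ext m c X k : (2 <= m)%N -> (1 <= k <= m)%N ->
  rG m.+2 c X k = rG m (X m.+1) X k.
Proof.
move=> m2 /andP [k1 km]; rewrite /rG.
have -> : (m.+2 == 2%N) = false by apply/eqP; lia.
have -> : (m.+2 == 3%N) = false by apply/eqP; lia.
case: ifP => [/eqP Hk|Hk]; first by case: ifP => [/eqP ->|//].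
case: ifP => [/eqP Hk2|Hk2]; first by case: ifP => [/eqP ->|//].
case: ifP => [/eqP Hk3|Hk3].
  case: ifP => [/eqP Hm|//]; rewrite Hm /=; ring.
have -> : (k == m.+2) = false by apply/eqP; lia.
case: ifP => [/eqP Hkm|//]; rewrite Hkm /=; ring.
Qed.

Definition zz m (X : nat -> F) := if m == 2%N then X 1%N * X 2%N else X m.

Lemma Pw_split m c X : (2 <= m)%N ->
  Pw m.+2 c X = Pw m (X m.+1) X * wt (X m.+1) (1 + zz m X * X m.+2)
                 * wt (X m.+2) (1 + c * X m.+1).
Proof.
move=> m2; rewrite /Pw !big_ord_recr /=; congr (_ * _ * _).
- apply: eq_bigr => i _; rewrite rG_ext //= ltn_ord.
- rewrite /rG /zz.
  have -> : (m.+1 == 1%N) = false by apply/eqP; lia.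
  have -> : (m.+1 == 2%N) = false by apply/eqP; lia.
  have -> : (m.+2 == 3%N) = false by apply/eqP; lia.
  case: ifP => [/eqP Hm|Hm]; first by rewrite (_ : m = 2%N) //; lia.
  have -> : (m.+1 == m.+2) = false by apply/eqP; lia.
  by have -> : (m == 2%N) = false by apply/eqP; lia.
- rewrite /rG.
  have -> : (m.+2 == 1%N) = false by apply/eqP; lia.
  have -> : (m.+2 == 2%N) = false by apply/eqP; lia.
  have -> : (m.+2 == 3%N) = false by apply/eqP; lia.
  by rewrite eqxx.
Qed.


Lemma cardF_gt1 : (1 < #|F|)%N.
Proof.
rewrite (cardD1 0) inE ltnS; apply/card_gt0P; exists 1.
by rewrite !inE oner_neq0.
Qed.

Lemma sum_nz_const (k : rat) : \sum_(v : F | v != 0) k = (q - 1) * k.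
Proof.
rewrite sumr_const -[LHS]mulr_natr [LHS]mulrC; congr (_ * _).
rewrite (_ : #|_| = #|F|.-1); last by rewrite -(cardC1 0).
have := cardF_gt1; case: #|F| => [|n] // _.
by rewrite /= -addn1 natrD addrK.
Qed.

Lemma wt0 x r : x != 0 -> wt x r = 1.
Proof. by rewrite /wt => ->. Qed.

Lemma wt01 : wt 0 1 = 0.
Proof. by rewrite /wt eqxx /= oner_eq0. Qed.

Lemma sum_wt_r r : \sum_v wt v r = (q - 1) + (if r == 0 then q else 0).
Proof.
rewrite (bigD1 0) //= addrC; congr (_ + _); last by rewrite /wt eqxx.
by rewrite -[q - 1]mulr1 -sum_nz_const; apply: eq_bigr => v; apply: wt0.
Qed.

Lemma inner u z c : \sum_v wt u (1 + z * v) * wt v (1 + c * u) =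
  if u != 0 then (q - 1) + (if 1 + c * u == 0 then q else 0)
  else (if z != 0 then q else 0).
Proof.
case: (eqVneq u 0) => [->|u0] /=; last first.
  by under eq_bigr do rewrite (wt0 _ u0) mul1r; rewrite sum_wt_r.
rewrite mulr0 addr0.
case: (eqVneq z 0) => [->|z0] /=.
  by rewrite big1 // => v _; rewrite mul0r addr0 wt01 mul0r.
have zi : - z^-1 != 0 by rewrite oppr_eq0 invr_eq0.
rewrite (bigD1 (- z^-1)) //= big1 ?addr0.
  by rewrite (wt0 _ zi) mulr1 mulrN divff // subrr /wt eqxx.
move=> v vn; rewrite {1}/wt eqxx /=; case: ifP => [/eqP h|_]; last by rewrite mul0r.
exfalso; move/eqP: vn; apply; apply: (mulfI z0); rewrite mulrN divff //.
by apply/eqP; rewrite -addr_eq0 addrC h.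
Qed.

Lemma rG_m0 m X : (3 <= m)%N -> rG m 0 X m = 1.
Proof.
move=> m3; rewrite /rG.
have -> : (m == 1%N) = false by apply/eqP; lia.
have -> : (m == 2%N) = false by apply/eqP; lia.
case: ifP => [/eqP Hm|_]; first by rewrite Hm /= !mul0r addr0.
by rewrite eqxx mul0r addr0.
Qed.

Lemma Pw0_zz m X : (2 <= m)%N -> zz m X = 0 -> Pw m 0 X = 0.
Proof.
move=> m2; rewrite /zz /Pw; case: (eqVneq m 2%N) => [->|m2'] /=.
  move/eqP; rewrite mulf_eq0 => /orP [] /eqP h.
    by rewrite (bigD1 (Ordinal (isT : (0 < 2)%N))) //= h /rG /= mulr0 addr0 wt01 mul0r.
  by rewrite (bigD1 (Ordinal (isT : (1 < 2)%N))) //= h /rG /= mulr0 addr0 wt01 mul0r.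
move=> h; have mm : (m.-1 < m)%N by lia.
rewrite (bigD1 (Ordinal mm)) //= (_ : m.-1.+1 = m); last by lia.
rewrite h rG_m0 ?wt01 ?mul0r //; lia.
Qed.


Definition kk (c u : F) : rat :=
  if u != 0 then (q - 1) + (if 1 + c * u == 0 then q else 0) else q.

Lemma cE_low m (g : {ffun 'I_m -> F}) u v i : (i <= m)%N ->
  Defs.coord (ext1 (ext1 g u) v) i = Defs.coord g i.
Proof. by move=> im; rewrite !coord_ext1 im (leqW im). Qed.

Lemma cE_u m (g : {ffun 'I_m -> F}) u v :
  Defs.coord (ext1 (ext1 g u) v) m.+1 = u.
Proof. by rewrite !coord_ext1 leqnn ltnn eqxx. Qed.

Lemma cE_v m (g : {ffun 'I_m -> F}) u v :
  Defs.coord (ext1 (ext1 g u) v) m.+2 = v.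
Proof.
by rewrite !coord_ext1 (_ : (m.+2 <= m.+1)%N = false) ?eqxx //; apply/negbTE; rewrite -ltnNge.
Qed.

Lemma zz_congr m X Y : (2 <= m)%N ->
  (forall i, (1 <= i <= m)%N -> X i = Y i) -> zz m X = zz m Y.
Proof.
move=> m2 E; rewrite /zz; case: ifP => [/eqP Hm|_];
  by rewrite !E //; apply/andP; split => //; lia.
Qed.

Lemma fD_rec m c : (2 <= m)%N -> fD m.+2 c = \sum_u kk c u * fD m u.
Proof.
move=> m2; rewrite /fD sum_ext1 sum_ext1.
under [RHS]eq_bigr do rewrite mulr_sumr.
rewrite [RHS]exchange_big /=; apply: eq_bigr => g _; apply: eq_bigr => u _.
have EL : forall v i, (1 <= i <= m)%N ->
   Defs.coord (ext1 (ext1 g u) v) i = Defs.coord g i.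
  by move=> v i /andP [_ H]; apply: cE_low.
under eq_bigr => v _ do rewrite Pw_split // cE_u cE_v (Pw_congr u m2 (EL v))
   (zz_congr m2 (EL v)) -mulrA.
rewrite -mulr_sumr inner mulrC /kk.
case: (eqVneq u 0) => [u0|//].
case: (eqVneq (zz m (Defs.coord g)) 0) => [h|//].
by rewrite u0 Pw0_zz // !mulr0.
Qed.


Lemma sum_ffun0 (G : {ffun 'I_0 -> F} -> rat) : \sum_g G g = G [ffun i => 0].
Proof.
rewrite (eq_bigr (fun _ => G [ffun i => 0])); last first.
  by move=> g _; congr G; apply/ffunP => -[].
by rewrite sumr_const card_ffun card_ord expn0.
Qed.

Lemma sum_ffun2 (G : (nat -> F) -> rat) :
  \sum_(g : {ffun 'I_2 -> F}) G (Defs.coord g) =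
  \sum_x \sum_y G (Defs.coord (ext1 (ext1 [ffun i : 'I_0 => 0] x) y)).
Proof. by rewrite sum_ext1 sum_ext1 sum_ffun0. Qed.

Lemma Pw2 c X : Pw 2 c X = wt (X 1%N) (1 + al * c) * wt (X 2%N) (1 + be * c).
Proof. by rewrite /Pw !big_ord_recr big_ord0 /= mul1r. Qed.

Lemma fD2 c : fD 2 c = ((q - 1) + (if 1 + al * c == 0 then q else 0)) *
                       ((q - 1) + (if 1 + be * c == 0 then q else 0)).
Proof.
rewrite /fD (sum_ffun2 (Pw 2 c)) -!sum_wt_r mulr_suml; apply: eq_bigr => x _.
rewrite mulr_sumr; apply: eq_bigr => y _.
by rewrite Pw2 (cE_u _ x y) (cE_v _ x y).
Qed.

Definition Zm m := fD m 0.
Definition Dm m := \sum_(u | u != 0) fD m u.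

Lemma Pw3 c X : Pw 3 c X = Pw 2 (X 3%N) X * wt (X 3%N) (1 + c * X 1%N * X 2%N).
Proof.
rewrite /Pw big_ord_recr /=; congr (_ * _); apply: eq_bigr => i _.
by rewrite /rG /=; case: i => [[|[|]]] //=.
Qed.

Lemma fD3 c : fD 3 c = Dm 2 + (if c != 0 then (q - 1) * q else 0).
Proof.
rewrite /fD sum_ext1.
have E : forall (g : {ffun 'I_2 -> F}) u i, (1 <= i <= 2)%N ->
   Defs.coord (ext1 g u) i = Defs.coord g i.
  by move=> g u i /andP [_ H]; rewrite coord_ext1 H.
have E3 : forall (g : {ffun 'I_2 -> F}) u, Defs.coord (ext1 g u) 3%N = u.
  by move=> g u; rewrite coord_ext1.
under eq_bigr => g _ do under eq_bigr => u _ do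
  rewrite Pw3 E3 (Pw_congr u (isT : (2 <= 2)%N) (E g u)) !E //.
rewrite exchange_big (bigD1 0) //= addrC /Dm /fD; congr (_ + _).
  apply: eq_bigr => u u0; apply: eq_bigr => g _; by rewrite wt0 // mulr1.
rewrite (sum_ffun2 (fun X => Pw 2 0 X * wt 0 (1 + c * X 1%N * X 2%N))).
transitivity (\sum_x wt x 1 * \sum_y wt 0 (1 + (c * x) * y) * wt y (1 + c * 0)).
  apply: eq_bigr => x _; rewrite mulr_sumr; apply: eq_bigr => y _.
  rewrite Pw2 (cE_u _ x y) (cE_v _ x y) !mulr0 !addr0; ring.
under eq_bigr => x _ do rewrite inner eqxx.
case: (eqVneq c 0) => [->|c0] /=.
  by rewrite big1 // => x _; rewrite mul0r eqxx mulr0.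
rewrite [LHS](bigD1 0) //= wt01 mul0r add0r -sum_nz_const.
apply: eq_bigr => x x0; by rewrite mulf_neq0 // wt0 // mul1r.
Qed.



Lemma fD_rec2 m c : (2 <= m)%N ->
  fD m.+2 c = q * Zm m + (q - 1) * Dm m + (if c != 0 then q * fD m (- c^-1) else 0).
Proof.
move=> m2; rewrite fD_rec // (bigD1 0) //= /kk eqxx /= -addrA; congr (_ + _).
rewrite /Dm mulr_sumr (eq_bigr (fun i => (q - 1) * fD m i +
   (if 1 + c * i == 0 then q else 0) * fD m i)); last by move=> i ->; rewrite mulrDl.
rewrite big_split /=; congr (_ + _).
case: (eqVneq c 0) => [->|c0] /=.
  by apply: big1 => u _; rewrite mul0r addr0 oner_eq0 mul0r.
have ci : - c^-1 != 0 by rewrite oppr_eq0 invr_eq0.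
rewrite (bigD1 (- c^-1)) //= mulrN divff // subrr eqxx big1 ?addr0 //.
move=> u /andP [u0 uc]; case: ifP => [/eqP h|_]; last by rewrite mul0r.
exfalso; move/eqP: uc; apply; apply: (mulfI c0); rewrite mulrN divff //.
by apply/eqP; rewrite -addr_eq0 addrC h.
Qed.

Lemma RZ m : (2 <= m)%N -> Zm m.+2 = q * Zm m + (q - 1) * Dm m.
Proof. by move=> m2; rewrite {1}/Zm fD_rec2 // eqxx addr0. Qed.

Lemma RC m c : (2 <= m)%N -> c != 0 -> fD m.+2 c = Zm m.+2 + q * fD m (- c^-1).
Proof. by move=> m2 c0; rewrite fD_rec2 // c0 RZ. Qed.

Lemma reind m : \sum_(c | c != 0) fD m (- c^-1) = Dm m.
Proof.
rewrite /Dm (reindex_inj (h := fun c : F => - c^-1)) /=.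
  apply: eq_big => [c|c _]; first by rewrite oppr_eq0 invr_eq0.
  by rewrite invrN invrK opprK.
by move=> x y /oppr_inj /invr_inj.
Qed.

Lemma RD m : (2 <= m)%N -> Dm m.+2 = (q - 1) * Zm m.+2 + q * Dm m.
Proof.
move=> m2; rewrite {1}/Dm (eq_bigr (fun c => Zm m.+2 + q * fD m (- c^-1))); last first.
  by move=> c c0; rewrite RC.
by rewrite big_split /= sum_nz_const -mulr_sumr reind.
Qed.


Local Notation dl := (((al == be) : bool)%:R : rat).

Lemma Z2 : Zm 2 = (q - 1) ^+ 2.
Proof. by rewrite /Zm fD2 !mulr0 !addr0 oner_eq0 !addr0 expr2. Qed.

Lemma ind (a c : F) : a != 0 -> (if 1 + a * c == 0 then q else 0) = (c == - a^-1)%:R * q.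
Proof.
move=> a0; case: ifP => [/eqP h|h].
  suff -> : c == - a^-1 by rewrite mul1r.
  apply/eqP; apply: (mulfI a0); rewrite mulrN divff //.
  by apply/eqP; rewrite -addr_eq0 addrC h.
suff -> : (c == - a^-1) = false by rewrite mul0r.
apply/negbTE/eqP => E; move/eqP: h; apply; by rewrite E mulrN divff // subrr.
Qed.

Lemma sum_nz_ind (a : F) (k : rat) : a != 0 -> \sum_(c : F | c != 0) (c == a)%:R * k = k.
Proof.
move=> a0; rewrite (bigD1 a) //= eqxx mul1r big1 ?addr0 //.
by move=> c /andP [_ ca]; rewrite (negbTE ca) mul0r.
Qed.

Lemma prod_ind (c A B : F) (x y : rat) :
  (x + (c == A)%:R * y) * (x + (c == B)%:R * y) =
  x ^+ 2 + (c == A)%:R * (x * y) + (c == B)%:R * (x * y) + (c == A)%:R * ((A == B)%:R * y ^+ 2).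
Proof.
case: (c =P A) => [->|/eqP cA]; case: (A =P B) => [AB|/eqP AB]; rewrite ?eqxx /=.
all: ring.
Qed.

Lemma D2 : al != 0 -> be != 0 -> Dm 2 = (q - 1) ^+ 3 + 2 * q * (q - 1) + dl * q ^+ 2.
Proof.
move=> a0 b0; rewrite /Dm.
have A0 : - al^-1 != 0 by rewrite oppr_eq0 invr_eq0.
have B0 : - be^-1 != 0 by rewrite oppr_eq0 invr_eq0.
have AB : (- al^-1 == - be^-1) = (al == be).
  by rewrite eqr_opp (inj_eq (@invr_inj F)).
rewrite (eq_bigr (fun c => (q - 1) ^+ 2 + (c == - al^-1)%:R * ((q - 1) * q)
   + (c == - be^-1)%:R * ((q - 1) * q)
   + (c == - al^-1)%:R * ((- al^-1 == - be^-1)%:R * q ^+ 2))); last first.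
  by move=> c _; rewrite fD2 (ind _ a0) (ind _ b0) prod_ind.
rewrite !big_split /= sum_nz_const !sum_nz_ind // AB; ring.
Qed.


Definition H (j : nat) : rat :=
  (q - 1) * (q ^+ j.+1 + (-1) ^+ j.+1) + dl * q ^+ 2 * (q ^+ j + (-1) ^+ j.+1) / (q + 1).

Lemma q1_neq0 : q + 1 != 0.
Proof. by rewrite natr1 pnatr_eq0. Qed.

Lemma qm1_neq0 : q - 1 != 0.
Proof. by rewrite subr_eq0 pnatr_eq1; have := cardF_gt1; case: #|F| => [|[|]]. Qed.

Lemma q2_neq0 : q ^+ 2 - 1 != 0.
Proof.
rewrite (_ : q ^+ 2 - 1 = (q - 1) * (q + 1)); last by ring.
by rewrite mulf_neq0 // ?q1_neq0 ?qm1_neq0.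
Qed.

Ltac fld := field; rewrite ?mulr1 -?expr2 ?q2_neq0 ?q1_neq0 ?qm1_neq0 //=.

Lemma H_rec j : H j.+2 = q * H j + (q - 1) * H j.+1.
Proof. have := q1_neq0; rewrite /H !exprS => h; fld. Qed.

Lemma ZD k : al != 0 -> be != 0 -> Zm k.+2 = H k /\ Dm k.+2 = H k.+1.
Proof.
move=> a0 b0.
have D3 : Dm 3 = (q - 1) * (Dm 2 + (q - 1) * q).
  rewrite -sum_nz_const; apply: eq_bigr => c c0; by rewrite fD3 c0.
suff : (Zm k.+2 = H k /\ Dm k.+2 = H k.+1) /\ (Zm k.+3 = H k.+1 /\ Dm k.+3 = H k.+2).
  by case.
elim: k => [|k [[IHz0 IHd0] [IHz IHd]]].
  have := q1_neq0 => h.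
  split; split.
  - by rewrite Z2 /H; fld.
  - by rewrite D2 // /H; fld.
  - by rewrite /Zm fD3 eqxx addr0 D2 // /H; fld.
  - by rewrite D3 D2 // /H; fld.
split; first by split.
have Z5 : Zm k.+4 = H k.+2.
  by rewrite RZ // IHz0 IHd0 H_rec.
split => //.
by rewrite RD // Z5 IHd0 [H k.+3]H_rec addrC.
Qed.

Lemma sgn_even j : (-1) ^+ (j.*2) = (1 : rat).
Proof. by rewrite -mul2n exprM expr2 mulrNN mulr1 expr1n. Qed.

Definition G (j : nat) : rat :=
  q ^+ (j.*2.+3) - 1 + dl * q ^+ 2 * (q ^+ (j.*2.+2) - 1) / (q ^+ 2 - 1).

Lemma odd_chain j c : al != 0 -> be != 0 -> c != 0 -> fD (j.*2.+3) c = G j.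
Proof.
move=> a0 b0; elim: j c => [|j IH] c c0.
  have := q2_neq0 => h.
  by rewrite fD3 c0 D2 // /G /=; fld.
rewrite doubleS RC // IH ?oppr_eq0 ?invr_eq0 //.
have [Z _] := ZD (j.*2.+3) a0 b0; rewrite Z.
have := q2_neq0 => h; have := q1_neq0 => h1.
rewrite /H /G doubleS !exprS expr0 sgn_even; fld.
Qed.

Definition Hc (j : nat) : rat :=
  (q ^+ j.+1 - 1) ^+ 2 - q ^+ j * (q - 1) ^+ 2
  + dl * q ^+ 2 * ((q ^+ j - 1) * (q ^+ j.+1 - 1)) / (q ^+ 2 - 1).

Lemma even_chain j c : al != 0 -> be != 0 -> c * c = 1 ->
  fD (j.*2.+2) c = Hc j + q ^+ j * fD 2 ((-1) ^+ j * c).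
Proof.
move=> a0 b0; elim: j c => [|j IH] c cc.
  have := q2_neq0 => h.
  rewrite /Hc /= expr0 !mul1r; fld.
have c0 : c != 0 by apply/eqP => c0; move: cc; rewrite c0 mul0r => /eqP; rewrite eq_sym oner_eq0.
have ci : c^-1 = c by rewrite -[c^-1]mul1r -cc mulfK.
rewrite doubleS RC // ci IH ?mulrNN //.
have [Z _] := ZD (j.*2.+2) a0 b0; rewrite Z.
rewrite [(-1) ^+ j.+1]exprS mulN1r mulNr -mulrN.
have := q2_neq0 => h; have := q1_neq0 => h1.
rewrite /H /Hc !exprS expr0 sgn_even -addnn exprD; fld.
Qed.

End S.

Lemma odd_form n : odd n -> (3 <= n)%N -> exists j, n = j.*2.+3.
Proof.
move=> on n3; have E := odd_double_half n; rewrite on -mul2n /= in E.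
exists (n./2 - 1)%N; rewrite -mul2n; lia.
Qed.

Lemma even_form n : ~~ odd n -> (3 <= n)%N -> exists j, n = j.*2.+2.
Proof.
move=> on n3; have E := odd_double_half n; rewrite (negbTE on) -mul2n /= in E.
exists (n./2 - 1)%N; rewrite -mul2n; lia.
Qed.

Lemma sgn_cond (F : finFieldType) (a : F) j :
  (1 + a * (-1) ^+ j == 0) = (a == (-1) ^+ j.+1).
Proof.
have t2 : (-1) ^+ j * (-1) ^+ j = 1 :> F.
  by rewrite -exprD addnn -mul2n exprM expr2 mulrNN mulr1 expr1n.
have tn : (-1) ^+ j != 0 :> F by rewrite expf_neq0 // oppr_eq0 oner_eq0.
rewrite exprS mulN1r; apply/eqP/eqP => [h|->]; last by rewrite mulNr t2 subrr.
apply: (mulIf tn); rewrite mulNr t2; apply/eqP.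
by rewrite -addr_eq0 addrC h.
Qed.

Theorem mainTheorem16 (F : finFieldType) (n : nat) :
  (3 <= n)%N ->
  let q : rat := (#|F|)%:R in
  let s : F := (-1) ^+ n./2 in
  (* (1) *)
  (odd n -> forall a : F, a != 0 -> a != 1 ->
     (NDodd n a)%:R = q ^+ n - 1) /\
  (* (2) *)
  (odd n ->
     (NDodd n (1 : F))%:R = q ^+ n - 1 + q ^+ 2 * ((q ^+ n.-1 - 1) / (q ^+ 2 - 1))) /\
  (* (3) *)
  (~~ odd n -> forall a b : F, a != 0 -> b != 0 -> a != b -> a != s -> b != s ->
     (NDeven n a b)%:R = (q ^+ n./2 - 1) ^+ 2) /\
  (* (4) *)
  (~~ odd n -> forall a : F, a != 0 -> a != s ->
     (NDeven n a a)%:R = (q ^+ n./2 - 1) ^+ 2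
        + q ^+ 2 * ((q ^+ (n./2 - 1) - 1) * (q ^+ n./2 - 1) / (q ^+ 2 - 1))) /\
  (* (5) *)
  (~~ odd n -> forall b : F, b != 0 -> s != b ->
     (NDeven n s b)%:R = (q ^+ n./2 - 1) ^+ 2 + (q - 1) * q ^+ n./2) /\
  (* (6) *)
  (~~ odd n ->
     (NDeven n s s)%:R = (q ^+ n./2 - 1) ^+ 2 + 2 * (q - 1) * q ^+ n./2
        + q ^+ 2 * ((q ^+ (n./2 - 1) - 1) * (q ^+ n./2 - 1) / (q ^+ 2 - 1))
        + q ^+ (n./2).+1).
Proof.
move=> n3 q s; rewrite /q /s.
have nz1 : (1 : F) != 0 := oner_neq0 _.
have sgn_nz : forall k, ((-1 : F) ^+ k) != 0.
  by move=> k; rewrite expf_neq0 // oppr_eq0 oner_eq0.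
have c1 : (1 : F) * 1 = 1 by rewrite mulr1.
split; [|split; [|split; [|split; [|split]]]].
- move=> on a a0 a1; have [j E] := odd_form on n3; rewrite E.
  rewrite /NDodd NX_fD // odd_chain // /G (negbTE a1) /=; ring.
- move=> on; have [j E] := odd_form on n3; rewrite E.
  rewrite /NDodd NX_fD // odd_chain // /G eqxx /=; ring.
- move=> on a b a0 b0 ab As Bs; have [j E] := even_form on n3; rewrite E in As Bs *.
  have hh : (j.*2.+2)./2 = j.+1 by rewrite /= doubleK.
  rewrite hh in As Bs *.
  rewrite /NDeven NX_fD; last by rewrite -E.
  rewrite even_chain // mulr1 fD2 !sgn_cond (negbTE As) (negbTE Bs).
  rewrite /Hc (negbTE ab) /= !exprS; ring.
- move=> on a a0 As; have [j E] := even_form on n3; rewrite E in As *.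
  have hh : (j.*2.+2)./2 = j.+1 by rewrite /= doubleK.
  rewrite hh in As *.
  rewrite /NDeven NX_fD; last by rewrite -E.
  rewrite even_chain // mulr1 fD2 !sgn_cond (negbTE As).
  rewrite /Hc eqxx /= subn1 /= !exprS; ring.
- move=> on b b0 Bs; have [j E] := even_form on n3; rewrite E in Bs *.
  have hh : (j.*2.+2)./2 = j.+1 by rewrite /= doubleK.
  rewrite hh in Bs *.
  rewrite /NDeven NX_fD; last by rewrite -E.
  rewrite even_chain // mulr1 fD2 !sgn_cond eqxx eq_sym (negbTE Bs).
  rewrite /Hc (negbTE Bs) /= !exprS; ring.
- move=> on; have [j E] := even_form on n3; rewrite E.
  have hh : (j.*2.+2)./2 = j.+1 by rewrite /= doubleK.
  rewrite hh.
  rewrite /NDeven NX_fD; last by rewrite -E.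
  rewrite even_chain // mulr1 fD2 !sgn_cond eqxx.
  rewrite /Hc eqxx /= subn1 /= !exprS; ring.
Qed.
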